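(* Let $I\subset\mathbb R$ be an open interval, let $f:I\to\mathbb R$ be continuous and bounded from below, and let $g:\mathrm{Im}(f)\to\mathbb R$ be continuous. The following are equivalent: (1) $f''\le g(f)$ in the viscosity sense on $I$, i.e., for every $x\in I$ and every smooth $\varphi$ defined in a neighborhood of $x$ such that $\varphi-f$ has a local maximum at $x$, one has $\varphi''(x)\le g(f(x))$; (2) $f''\le g(f)$ in the sense of distributions on $I$, i.e., $\int f\varphi''\,dx\le\int g(f)\varphi\,dx$ for every $\varphi\in C^\infty_c(I)$ with $\varphi\ge0$; (3) $\overline D^2f(x)\le g(f(x))$ for every $x\in I$.
   Context: $\overline D^2f(x)=\limsup_{h\to0^+}\frac{f(x+h)+f(x-h)-2f(x)}{h^2}$. *)

(* Defs.v *)
From Stdlib Require Import Reals.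
From Coquelicot Require Import Coquelicot.
Open Scope R_scope.

Definition in_open_interval (a b : Rbar) (x : R) : Prop :=
  Rbar_lt a x /\ Rbar_lt x b.

Definition image_on (a b : Rbar) (f : R -> R) (y : R) : Prop :=
  exists x, in_open_interval a b x /\ y = f x.

Definition smooth_near (phi : R -> R) (x r : R) : Prop :=
  forall (n : nat) (y : R), Rabs (y - x) < r -> ex_derive_n phi n y.

Definition smooth (phi : R -> R) : Prop :=
  forall (n : nat) (y : R), ex_derive_n phi n y.

Definition sym_quot2 (f : R -> R) (x h : R) : R :=
  (f (x + h) + f (x - h) - 2 * f x) / (h ^ 2).

(* Upper second symmetric derivative:
   limsup_{h -> 0+} (f(x+h)+f(x-h)-2f(x))/h^2
   = inf_{delta>0} sup_{0<h<delta} sym_quot2 f x h   (an extended real). *)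
Definition upper_D2 (f : R -> R) (x : R) : Rbar :=
  Rbar_glb (fun y : Rbar => exists delta : R, 0 < delta /\
     y = Lub_Rbar (fun z : R => exists h : R, 0 < h < delta /\ z = sym_quot2 f x h)).

Definition viscosity_sub (a b : Rbar) (f g : R -> R) : Prop :=
  forall (x : R) (phi : R -> R), in_open_interval a b x ->
    (exists r, 0 < r /\ smooth_near phi x r) ->
    (exists r, 0 < r /\ forall y, Rabs (y - x) < r -> phi y - f y <= phi x - f x) ->
    Derive_n phi 2 x <= g (f x).

(* (2) f'' <= g(f) in the sense of distributions on I: for every nonnegative
   phi in C_c^infinity(I) (support contained in [c,d] with [c,d] inside I),
   int f phi'' <= int g(f) phi. *)
Definition distrib_sub (a b : Rbar) (f g : R -> R) : Prop :=
  forall (phi : R -> R) (c d : R),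
    Rbar_lt a c -> c <= d -> Rbar_lt d b ->
    smooth phi ->
    (forall y, (y < c \/ d < y) -> phi y = 0) ->
    (forall y, 0 <= phi y) ->
    RInt (fun t => f t * Derive_n phi 2 t) c d <= RInt (fun t => g (f t) * phi t) c d.

Definition symD2_sub (a b : Rbar) (f g : R -> R) : Prop :=
  forall x, in_open_interval a b x -> Rbar_le (upper_D2 f x) (Finite (g (f x))).

(* Main.v *)
Require Import Defs.
From Stdlib Require Import Reals Lra Lia Classical FunctionalExtensionality.
From Coquelicot Require Import Coquelicot.
Open Scope R_scope.


Ltac sabs := repeat split_Rabs; lra.

Lemma loc_ball (P : R -> Prop) z e : 0 < e -> (forall y, Rabs (y - z) < e -> P y) -> locally z P.
Proof. intros He H. exists (mkposreal e He). intros y Hy. apply H. exact Hy. Qed.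

Lemma ball_loc (P : R -> Prop) z : locally z P -> exists e, 0 < e /\ forall y, Rabs (y - z) < e -> P y.
Proof. intros [e He]. exists e. split. apply cond_pos. intros y Hy. apply He. exact Hy. Qed.

Lemma cont_ed (F : R -> R) x : continuous F x ->
  forall eps, 0 < eps -> exists d, 0 < d /\ forall y, Rabs (y - x) < d -> Rabs (F y - F x) < eps.
Proof.
  intros Hc eps He.
  apply (proj1 (filterlim_locally F (F x))) with (eps := mkposreal eps He) in Hc.
  destruct (ball_loc _ _ Hc) as [d [Hd H]].
  exists d; split; auto.
Qed.

Lemma ed_cont (F : R -> R) x :
  (forall eps, 0 < eps -> exists d, 0 < d /\ forall y, Rabs (y - x) < d -> Rabs (F y - F x) < eps) ->
  continuous F x.
Proof.
  intros H. apply (proj2 (filterlim_locally F (F x))). intros [e He].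
  destruct (H e He) as [d [Hd H']]. apply (loc_ball _ _ d Hd). intros y Hy. apply H'. exact Hy.
Qed.

Lemma cont_pt (F : R -> R) x : continuous F x -> continuity_pt F x.
Proof. intros H. apply continuity_pt_filterlim. exact H. Qed.

Lemma I_ball a b x : in_open_interval a b x ->
  exists r, 0 < r /\ forall y, Rabs (y - x) <= r -> in_open_interval a b y.
Proof.
  intros [Ha Hb].
  assert (exists r1, 0 < r1 /\ forall y, Rabs (y-x) <= r1 -> Rbar_lt a y) as [r1 [H1 H1']].
  { destruct a as [a| |]; simpl in *.
    - exists ((x - a)/2); split; [lra|]. intros y Hy; simpl. apply Rabs_le_between' in Hy. lra.
    - contradiction.
    - exists 1; split; [lra|]. intros; simpl; auto. }
  assert (exists r2, 0 < r2 /\ forall y, Rabs (y-x) <= r2 -> Rbar_lt y b) as [r2 [H2 H2']].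
  { destruct b as [b| |]; simpl in *.
    - exists ((b - x)/2); split; [lra|]. intros y Hy; simpl. apply Rabs_le_between' in Hy. lra.
    - exists 1; split; [lra|]. intros; simpl; auto.
    - contradiction. }
  exists (Rmin r1 r2). split. apply Rmin_pos; auto.
  intros y Hy. split. apply H1'. eapply Rle_trans; [apply Hy|apply Rmin_l].
  apply H2'. eapply Rle_trans; [apply Hy|apply Rmin_r].
Qed.

Lemma I_seg a b p q z : in_open_interval a b p -> in_open_interval a b q -> p <= z <= q ->
  in_open_interval a b z.
Proof.
  intros [Hp1 Hp2] [Hq1 Hq2] Hz. split.
  - eapply Rbar_lt_le_trans. apply Hp1. simpl; lra.
  - eapply Rbar_le_lt_trans. 2: apply Hq2. simpl; lra.
Qed.

Lemma h_cont a b (f g : R -> R) x :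
  (forall x, in_open_interval a b x -> continuous f x) ->
  (forall y, image_on a b f y -> filterlim g (within (image_on a b f) (locally y)) (locally (g y))) ->
  in_open_interval a b x -> continuous (fun t => g (f t)) x.
Proof.
  intros Hf Hg Hx. unfold continuous.
  eapply filterlim_comp. 2: apply (Hg (f x)). 2: { exists x; split; auto. }
  intros P HP. unfold within in HP. unfold filtermap.
  assert (H1 := Hf x Hx _ HP). unfold filtermap in H1.
  destruct (I_ball _ _ _ Hx) as [r [Hr Hr']].
  assert (H2 : locally x (fun t => in_open_interval a b t)).
  { apply (loc_ball _ _ r Hr). intros y Hy. apply Hr'. lra. }
  generalize (filter_and _ _ H1 H2). apply filter_imp. intros t [Ht1 Ht2]. apply Ht1.
  exists t; split; auto.
Qed.

Lemma TL2 (phi : R -> R) x r t : 0 < t < r ->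
  (forall n y, Rabs (y - x) < r -> ex_derive_n phi n y) ->
  exists z1 z2, Rabs (z1 - x) < t /\ Rabs (z2 - x) < t /\
    sym_quot2 phi x t = (Derive_n phi 2 z1 + Derive_n phi 2 z2) / 2.
Proof.
  intros Ht Hs.
  destruct (Taylor_Lagrange phi 1 x (x + t)) as [z1 [Hz1 E1]]. lra.
  { intros s Hsx k Hk. apply Hs. sabs. }
  destruct (Taylor_Lagrange (fun y => phi (- y)) 1 (- x) (- x + t)) as [z [Hz E2]]. lra.
  { intros s Hsx k Hk. apply ex_derive_n_comp_opp.
    apply (loc_ball _ _ (r - t)). lra. intros y Hy k' Hk'. apply Hs. sabs. }
  assert (L : forall s, Rabs (s - x) <= t -> locally s (fun y => forall k, (k <= 2)%nat -> ex_derive_n phi k y)).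
  { intros s Hsx. apply (loc_ball _ _ (r - t)). lra. intros y Hy k' Hk'. apply Hs. sabs. }
  simpl sum_f_R0 in E2.
  change (Derive (fun x => phi (-x)) (-x)) with (Derive_n (fun y => phi (-y)) 1 (-x)) in E2.
  rewrite (Derive_n_comp_opp phi 2 z) in E2.
  2: { replace (- z) with (- z) by ring. apply L. sabs. }
  rewrite (Derive_n_comp_opp phi 1 (-x)) in E2.
  2: { rewrite Ropp_involutive. apply (loc_ball _ _ (r - t)). lra. intros y Hy k' Hk'. apply Hs. sabs. }
  exists z1, (- z). split; [sabs|]. split; [sabs|].
  unfold sym_quot2. simpl in E1, E2. rewrite Ropp_involutive in E2.
  replace (- (- x + t)) with (x - t) in E2 by ring.
  replace (x + t - x) with t in E1 by ring.
  replace (- x + t - - x) with t in E2 by ring.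
  rewrite E1, E2. simpl. field. lra.
Qed.


Lemma mid_lemma (w : R -> R) y s : 0 < s ->
  (forall z, y - s <= z <= y + s -> continuous w z) ->
  (forall z al be, y - s < z < y + s ->
     (exists r, 0 < r /\ forall u, Rabs (u - z) < r -> w z - (al * z + be) <= w u - (al * u + be)) -> False) ->
  sym_quot2 w y s <= 0.
Proof.
  intros Hs Hc Hno.
  destruct (Rle_or_lt (sym_quot2 w y s) 0) as [H|H]; auto. exfalso.
  unfold sym_quot2 in H.
  assert (H' : w (y + s) + w (y - s) - 2 * w y > 0).
  { apply Rnot_le_lt. intros Hle. assert (0 < s ^ 2) by (apply pow_lt; lra).
    assert ((w (y + s) + w (y - s) - 2 * w y) / s ^ 2 <= 0).
    { unfold Rdiv. apply Rmult_le_0_r. lra. left. apply Rinv_0_lt_compat. lra. } lra. }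
  set (al := (w (y + s) - w (y - s)) / (2 * s)).
  set (be := w (y - s) - al * (y - s)).
  set (v := fun u => w u - (al * u + be)).
  assert (Hv1 : v (y - s) = 0) by (unfold v, be; ring).
  assert (Hv2 : v (y + s) = 0) by (unfold v, be, al; field; lra).
  assert (Hv3 : v y < 0).
  { assert (v y = w y - (w (y+s) + w (y-s))/2) by (unfold v, be, al; field; lra). lra. }
  destruct (continuity_ab_min v (y - s) (y + s)) as [mx [Hmx1 Hmx2]]. lra.
  { intros c Hc'. apply cont_pt. unfold v. apply (continuous_minus w (fun u => al * u + be)).
    apply Hc; auto. apply (continuous_plus (fun u => al * u) (fun _ => be)).
    apply (continuous_mult (fun _ => al) (fun u => u)). apply continuous_const. apply continuous_id.
    apply continuous_const. }
  assert (Hin : y - s < mx < y + s).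
  { assert (v mx <= v y) by (apply Hmx1; lra).
    assert (v mx <= v (y - s)) by (apply Hmx1; lra).
    destruct Hmx2 as [Hm1 Hm2]. split.
    - destruct Hm1 as [Hm1|Hm1]; auto. subst mx. lra.
    - destruct Hm2 as [Hm2|Hm2]; auto. rewrite Hm2 in H0. lra. }
  apply (Hno mx al be Hin). exists (Rmin (mx - (y - s)) (y + s - mx)). split.
  apply Rmin_pos; lra.
  intros u Hu. apply (Hmx1 u).
  assert (Rmin (mx - (y - s)) (y + s - mx) <= mx - (y - s)) by apply Rmin_l.
  assert (Rmin (mx - (y - s)) (y + s - mx) <= y + s - mx) by apply Rmin_r.
  sabs.
Qed.

Definition P3 (f h : R -> R) x := forall eps, 0 < eps ->
  exists d, 0 < d /\ forall t, 0 < t < d -> sym_quot2 f x t <= h x + eps.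

Lemma Q_sub_lin (w : R -> R) al be z t : 0 < t ->
  sym_quot2 (fun u => w u - (al * u + be)) z t = sym_quot2 w z t.
Proof. intros Ht. unfold sym_quot2. field. lra. Qed.

Lemma Q_sub_quad (f : R -> R) A z t : 0 < t ->
  sym_quot2 (fun u => f u - A * u ^ 2 / 2) z t = sym_quot2 f z t - A.
Proof. intros Ht. unfold sym_quot2. field. lra. Qed.

Lemma Q_localmin (v : R -> R) z r t : 0 < t < r ->
  (forall u, Rabs (u - z) < r -> v z <= v u) -> 0 <= sym_quot2 v z t.
Proof.
  intros Ht H. unfold sym_quot2.
  assert (v z <= v (z + t)) by (apply H; sabs).
  assert (v z <= v (z - t)) by (apply H; sabs).
  apply Rdiv_le_0_compat. lra. apply pow_lt; lra.
Qed.

Lemma mid_P3 (w : R -> R) y s : 0 < s ->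
  (forall z, y - s <= z <= y + s -> continuous w z) ->
  (forall z, y - s < z < y + s -> exists d, 0 < d /\ forall t, 0 < t < d -> sym_quot2 w z t < 0) ->
  sym_quot2 w y s <= 0.
Proof.
  intros Hs Hc HQ. apply mid_lemma; auto.
  intros z al be Hz [r [Hr Hmin]].
  destruct (HQ z Hz) as [d [Hd Hd']].
  set (t := Rmin d r / 2).
  assert (Ht : 0 < t) by (unfold t; generalize (Rmin_pos d r Hd Hr); lra).
  assert (Htd : t < d) by (unfold t; generalize (Rmin_l d r); lra).
  assert (Htr : t < r) by (unfold t; generalize (Rmin_r d r); lra).
  assert (H1 := Hd' t (conj Ht Htd)).
  assert (H2 := Q_localmin (fun u => w u - (al * u + be)) z r t (conj Ht Htr) Hmin).
  rewrite Q_sub_lin in H2; lra.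
Qed.

Lemma symD2_P3 (f : R -> R) x (c : R) :
  Rbar_le (upper_D2 f x) (Finite c) <->
  (forall eps, 0 < eps -> exists d, 0 < d /\ forall t, 0 < t < d -> sym_quot2 f x t <= c + eps).
Proof.
  unfold upper_D2.
  set (S := fun y : Rbar => exists delta : R, 0 < delta /\
     y = Lub_Rbar (fun z : R => exists h : R, 0 < h < delta /\ z = sym_quot2 f x h)).
  destruct (proj2_sig (Rbar_ex_glb S)) as [Hlb Hglb]. fold (Rbar_glb S) in Hlb, Hglb.
  split.
  - intros Hle eps He.
    destruct (classic (exists y, S y /\ Rbar_lt y (c + eps))) as [[y [[d [Hd ->]] Hy]]|Hn].
    + exists d; split; auto. intros t Ht.
      destruct (Lub_Rbar_correct (fun z : R => exists h : R, 0 < h < d /\ z = sym_quot2 f x h)) as [Hub _].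
      assert (Hz : Rbar_le (sym_quot2 f x t) (Lub_Rbar (fun z : R => exists h : R, 0 < h < d /\ z = sym_quot2 f x h))).
      { apply Hub. exists t; split; auto. }
      assert (Rbar_lt (sym_quot2 f x t) (c + eps)) by (eapply Rbar_le_lt_trans; eauto).
      simpl in H. lra.
    + exfalso.
      assert (Hl : Rbar_is_lower_bound S (c + eps)).
      { intros y Hy. apply Rbar_not_lt_le. intros Hlt. apply Hn. exists y; split; auto. }
      assert (H2 := Hglb _ Hl).
      assert (H3 := Rbar_le_trans _ _ _ H2 Hle). simpl in H3. lra.
  - intros H.
    assert (Hall : forall eps, 0 < eps -> Rbar_le (Rbar_glb S) (c + eps)).
    { intros eps He. destruct (H eps He) as [d [Hd Hd']].
      eapply Rbar_le_trans. apply Hlb. exists d; split; [auto|reflexivity].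
      destruct (Lub_Rbar_correct (fun z : R => exists h : R, 0 < h < d /\ z = sym_quot2 f x h)) as [_ Hl].
      apply Hl. intros z [t [Ht ->]]. simpl. apply Hd'; auto. }
    destruct (Rbar_glb S) as [r| |] eqn:E.
    + simpl. apply Rnot_lt_le. intros Hlt.
      assert (Hq := Hall ((r - c)/2) ltac:(lra)). simpl in Hq. lra.
    + assert (Hq := Hall 1 ltac:(lra)). simpl in Hq. contradiction.
    + simpl. auto.
Qed.


Definition sm (F : R -> R) := forall n x, ex_derive_n F n x.

Lemma sm_plus F G : sm F -> sm G -> sm (fun x => F x + G x).
Proof. intros HF HG n x. apply ex_derive_n_plus; apply filter_forall; intros; auto. Qed.
Lemma sm_minus F G : sm F -> sm G -> sm (fun x => F x - G x).
Proof. intros HF HG n x. apply ex_derive_n_minus; apply filter_forall; intros; auto. Qed.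
Lemma sm_scal k F : sm F -> sm (fun x => k * F x).
Proof. intros HF n x. apply ex_derive_n_scal_l; auto. Qed.
Lemma sm_trans F b : sm F -> sm (fun x => F (x + b)).
Proof. intros HF n x. apply ex_derive_n_comp_trans; auto. Qed.
Lemma sm_const c : sm (fun _ => c).
Proof. intros n x. apply ex_derive_n_const. Qed.
Lemma sm_pow p : sm (fun x => x ^ p).
Proof. intros n x. apply ex_derive_n_pow. Qed.
Lemma sm_ext F G : sm F -> (forall x, F x = G x) -> sm G.
Proof. intros HF E n x. eapply ex_derive_n_ext. apply E. apply HF. Qed.

Lemma quad_sm A al be : sm (fun u => A * u ^ 2 / 2 + (al * u + be)).
Proof.
  apply sm_ext with (fun u => (A/2) * u ^ 2 + ((al * u ^ 1) + be)).
  apply sm_plus. apply sm_scal, sm_pow. apply sm_plus. apply sm_scal, sm_pow. apply sm_const.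
  intros; simpl; field.
Qed.

Lemma quad_D2 A al be z : Derive_n (fun u => A * u ^ 2 / 2 + (al * u + be)) 2 z = A.
Proof.
  change (Derive (Derive (fun u => A * u ^ 2 / 2 + (al * u + be))) z = A).
  assert (E : forall t, Derive (fun u => A * u ^ 2 / 2 + (al * u + be)) t = A * t + al).
  { intros t. apply is_derive_unique. auto_derive. auto. field. }
  rewrite (Derive_ext _ _ z E).
  apply is_derive_unique. auto_derive. auto. ring.
Qed.

Section Main.
Variables (a b : Rbar) (f g : R -> R).
Hypothesis Hfc : forall x, in_open_interval a b x -> continuous f x.
Hypothesis Hgc : forall y, image_on a b f y ->
     filterlim g (within (image_on a b f) (locally y)) (locally (g y)).
Let h := fun t => g (f t).

Lemma hc x : in_open_interval a b x -> continuous h x.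
Proof. intros Hx; exact (h_cont a b f g x Hfc Hgc Hx). Qed.

Lemma visc_P3 : viscosity_sub a b f g -> forall x, in_open_interval a b x -> P3 f h x.
Proof.
  intros Hv x0 Hx0 eps He.
  destruct (cont_ed h x0 (hc x0 Hx0) eps He) as [d1 [Hd1 Hd1']].
  destruct (I_ball _ _ _ Hx0) as [r [Hr Hr']].
  exists (Rmin d1 r). split. apply Rmin_pos; auto.
  intros t Ht.
  assert (Htd : t < d1) by (generalize (Rmin_l d1 r); lra).
  assert (Htr : t < r) by (generalize (Rmin_r d1 r); lra).
  set (A := h x0 + eps).
  assert (E := Q_sub_quad f A x0 t (proj1 Ht)).
  cut (sym_quot2 (fun u => f u - A * u ^ 2 / 2) x0 t <= 0). lra.
  apply mid_lemma. lra.
  - intros z Hz. apply (continuous_minus f (fun u => A * u ^ 2 / 2)).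
    apply Hfc. apply Hr'. sabs.
    apply ex_derive_continuous. auto_derive; auto.
  - intros z al be Hz [r' [Hr'0 Hmin]].
    assert (HzI : in_open_interval a b z) by (apply Hr'; sabs).
    assert (Hvz := Hv z (fun u => A * u ^ 2 / 2 + (al * u + be)) HzI).
    rewrite quad_D2 in Hvz.
    assert (A <= g (f z)).
    { apply Hvz. exists 1; split; [lra|]. intros n y _. apply quad_sm.
      exists r'; split; auto. intros y Hy. specialize (Hmin y Hy). lra. }
    assert (Rabs (h z - h x0) < eps) by (apply Hd1'; sabs).
    unfold h in *. unfold A in H. sabs.
Qed.

Lemma P3_visc : (forall x, in_open_interval a b x -> P3 f h x) -> viscosity_sub a b f g.
Proof.
  intros HP x phi Hx [r [Hr Hsm]] [r' [Hr' Hmax]].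
  apply Rnot_lt_le. intros Hlt.
  set (eps := (Derive_n phi 2 x - g (f x)) / 3).
  assert (He : 0 < eps) by (unfold eps; lra).
  assert (Hc2 : continuous (Derive_n phi 2) x).
  { apply (ex_derive_continuous (Derive_n phi 2) x). exact (Hsm 3%nat x ltac:(rewrite Rminus_diag, Rabs_R0; auto)). }
  destruct (cont_ed _ _ Hc2 eps He) as [d2 [Hd2 Hd2']].
  destruct (HP x Hx eps He) as [d3 [Hd3 Hd3']].
  set (t := Rmin (Rmin d2 d3) (Rmin r r') / 2).
  assert (Ht : 0 < t) by (unfold t; generalize (Rmin_pos _ _ (Rmin_pos _ _ Hd2 Hd3) (Rmin_pos _ _ Hr Hr')); lra).
  assert (t < d2 /\ t < d3 /\ t < r /\ t < r') as [T1 [T2 [T3 T4]]].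
  { unfold t. generalize (Rmin_l (Rmin d2 d3) (Rmin r r')) (Rmin_r (Rmin d2 d3) (Rmin r r'))
     (Rmin_l d2 d3) (Rmin_r d2 d3) (Rmin_l r r') (Rmin_r r r'). lra. }
  destruct (TL2 phi x r t (conj Ht T3) Hsm) as [z1 [z2 [Hz1 [Hz2 EQ]]]].
  assert (Rabs (Derive_n phi 2 z1 - Derive_n phi 2 x) < eps) by (apply Hd2'; lra).
  assert (Rabs (Derive_n phi 2 z2 - Derive_n phi 2 x) < eps) by (apply Hd2'; lra).
  assert (Q1 : sym_quot2 f x t <= h x + eps) by (apply Hd3'; lra).
  assert (Q2 : sym_quot2 phi x t <= sym_quot2 f x t).
  { unfold sym_quot2. apply Rmult_le_compat_r. left; apply Rinv_0_lt_compat, pow_lt; lra.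
    assert (phi (x + t) - f (x + t) <= phi x - f x) by (apply Hmax; sabs).
    assert (phi (x - t) - f (x - t) <= phi x - f x) by (apply Hmax; sabs). lra. }
  unfold h in Q1. unfold eps in *. sabs.
Qed.

End Main.


Lemma cmul (F G : R -> R) x : continuous F x -> continuous G x -> continuous (fun t => F t * G t) x.
Proof. intros; apply (continuous_mult F G x); auto. Qed.
Lemma cplus (F G : R -> R) x : continuous F x -> continuous G x -> continuous (fun t => F t + G t) x.
Proof. intros; apply (continuous_plus F G x); auto. Qed.
Lemma cminus (F G : R -> R) x : continuous F x -> continuous G x -> continuous (fun t => F t - G t) x.
Proof. intros; apply (continuous_minus F G x); auto. Qed.
Lemma cconst (c x : R) : continuous (fun _ => c) x.
Proof. apply continuous_const. Qed.
Lemma cid (x : R) : continuous (fun t => t) x.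
Proof. apply continuous_id. Qed.
Lemma cshift (F : R -> R) b x : continuous F (x + b) -> continuous (fun t => F (t + b)) x.
Proof. intros H. apply (continuous_comp (fun t => t + b) F x); auto. apply cplus. apply cid. apply cconst. Qed.
Lemma cshift' (F : R -> R) b x : continuous F (x - b) -> continuous (fun t => F (t - b)) x.
Proof. intros H. apply (continuous_comp (fun t => t - b) F x); auto. apply cminus. apply cid. apply cconst. Qed.
Lemma cabs (F : R -> R) x : continuous F x -> continuous (fun t => Rabs (F t)) x.
Proof. intros H. apply (continuous_comp F Rabs x); auto. apply continuity_pt_filterlim. apply Rcontinuity_abs. Qed.
Lemma sm_cont F : sm F -> forall x, continuous F x.
Proof. intros H x. apply (ex_derive_continuous F x). exact (H 1%nat x). Qed.
Lemma sm_D2_cont F : sm F -> forall x, continuous (Derive_n F 2) x.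
Proof. intros H x. apply (ex_derive_continuous (Derive_n F 2) x). exact (H 3%nat x). Qed.

Lemma exR (F : R -> R) L U p q : L <= p <= U -> L <= q <= U ->
  (forall z, L <= z <= U -> continuous F z) -> ex_RInt F p q.
Proof.
  intros Hp Hq H. apply (@ex_RInt_continuous R_CompleteNormedModule F p q). intros z Hz. apply H.
  split. eapply Rle_trans; [|apply Hz]. apply Rmin_glb; lra.
  eapply Rle_trans; [apply Hz|]. apply Rmax_lub; lra.
Qed.

Lemma Rint_plus (A B : R -> R) p q : ex_RInt A p q -> ex_RInt B p q ->
  RInt (fun t => A t + B t) p q = RInt A p q + RInt B p q.
Proof. intros. exact (RInt_plus A B p q H H0). Qed.
Lemma Rint_minus (A B : R -> R) p q : ex_RInt A p q -> ex_RInt B p q ->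
  RInt (fun t => A t - B t) p q = RInt A p q - RInt B p q.
Proof. intros. exact (RInt_minus A B p q H H0). Qed.
Lemma Rint_scal (A : R -> R) p q k : ex_RInt A p q -> RInt (fun t => k * A t) p q = k * RInt A p q.
Proof. intros. exact (RInt_scal A p q k H). Qed.
Lemma Rint_const p q (c : R) : RInt (fun _ => c) p q = (q - p) * c.
Proof. exact (RInt_const p q c). Qed.
Lemma Rint_chasles (A : R -> R) p q r : ex_RInt A p q -> ex_RInt A q r ->
  RInt A p q + RInt A q r = RInt A p r.
Proof. intros. exact (RInt_Chasles A p q r H H0). Qed.
Lemma Rint_ext (A B : R -> R) p q : (forall x, Rmin p q < x < Rmax p q -> A x = B x) -> RInt A p q = RInt B p q.
Proof. intros H. exact (RInt_ext A B p q H). Qed.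
Lemma Rint_zero (A : R -> R) p q : (forall x, Rmin p q < x < Rmax p q -> A x = 0) -> RInt A p q = 0.
Proof. intros H. rewrite (RInt_ext A (fun _ => 0)). rewrite Rint_const. apply Rmult_0_r. exact H. Qed.
Lemma exR_plus (A B : R -> R) p q : ex_RInt A p q -> ex_RInt B p q -> ex_RInt (fun t => A t + B t) p q.
Proof. intros. exact (ex_RInt_plus A B p q H H0). Qed.
Lemma exR_minus (A B : R -> R) p q : ex_RInt A p q -> ex_RInt B p q -> ex_RInt (fun t => A t - B t) p q.
Proof. intros. exact (ex_RInt_minus A B p q H H0). Qed.
Lemma exR_scal (A : R -> R) p q k : ex_RInt A p q -> ex_RInt (fun t => k * A t) p q.
Proof. intros. exact (ex_RInt_scal A p q k H). Qed.

Lemma lin3 (A B C : R -> R) p q k : ex_RInt A p q -> ex_RInt B p q -> ex_RInt C p q ->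
  RInt (fun t => k * (A t + B t - 2 * C t)) p q = k * (RInt A p q + RInt B p q - 2 * RInt C p q).
Proof.
  intros HA HB HC.
  rewrite Rint_scal, Rint_minus, Rint_plus, Rint_scal; auto.
  apply exR_plus; auto. apply exR_scal; auto.
  apply exR_minus. apply exR_plus; auto. apply exR_scal; auto.
Qed.

Lemma shift_int (F G : R -> R) c d c1 d1 s :
  c1 + Rabs s <= c -> c <= d -> d + Rabs s <= d1 ->
  (forall y, y < c \/ d < y -> G y = 0) ->
  (forall y, continuous G y) ->
  (forall z, c1 - 2 * Rabs s <= z <= d1 + 2 * Rabs s -> continuous F z) ->
  RInt (fun t => F t * G (t + s)) c1 d1 = RInt (fun t => F (t - s) * G t) c1 d1.
Proof.
  intros H1 H2 H3 HG HGc HF.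
  set (K := fun y => F (y - s) * G y).
  assert (HK : forall z, c1 - Rabs s <= z <= d1 + Rabs s -> continuous K z).
  { intros z Hz. unfold K. apply cmul; auto. apply cshift'. apply HF. sabs. }
  assert (Ea : Rabs s <= Rabs s) by lra.
  assert (0 <= Rabs s) by apply Rabs_pos.
  assert (E1 : RInt (fun t => F t * G (t + s)) c1 d1 = RInt K (c1 + s) (d1 + s)).
  { rewrite <- (RInt_ext (fun y => scal 1 (K (1 * y + s)))).
    replace (c1 + s) with (1 * c1 + s) by ring. replace (d1 + s) with (1 * d1 + s) by ring.
    apply (RInt_comp_lin K 1 s c1 d1).
    apply (exR K (c1 - Rabs s) (d1 + Rabs s)); auto; sabs.
    intros x _. unfold K. unfold scal; simpl; unfold mult; simpl.
    replace (1 * x + s - s) with x by ring. replace (1 * x + s) with (x + s) by ring. ring. }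
  rewrite E1.
  assert (Z1 : RInt K c1 (c1 + s) = 0).
  { apply Rint_zero. intros x Hx. unfold K. rewrite HG. ring. left.
    assert (x < Rmax c1 (c1 + s)) by apply Hx. assert (Rmax c1 (c1+s) <= c1 + Rabs s) by (apply Rmax_lub; sabs).
    lra. }
  assert (Z2 : RInt K d1 (d1 + s) = 0).
  { apply Rint_zero. intros x Hx. unfold K. rewrite HG. ring. right.
    assert (Rmin d1 (d1 + s) < x) by apply Hx. assert (d1 - Rabs s <= Rmin d1 (d1+s)) by (apply Rmin_glb; sabs).
    lra. }
  assert (EX : forall p q, c1 - Rabs s <= p <= d1 + Rabs s -> c1 - Rabs s <= q <= d1 + Rabs s -> ex_RInt K p q).
  { intros p q Hp Hq. apply (exR K (c1 - Rabs s) (d1 + Rabs s)); auto. }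
  assert (C1 := Rint_chasles K c1 (c1 + s) (d1 + s) (EX c1 (c1+s) ltac:(sabs) ltac:(sabs)) (EX (c1+s) (d1+s) ltac:(sabs) ltac:(sabs))).
  assert (C2 := Rint_chasles K c1 d1 (d1 + s) (EX c1 d1 ltac:(sabs) ltac:(sabs)) (EX d1 (d1+s) ltac:(sabs) ltac:(sabs))).
  transitivity (RInt K c1 d1); [|reflexivity]. lra.
Qed.

Lemma Q_int (F G : R -> R) c d c1 d1 s :
  0 < s -> c1 + s <= c -> c <= d -> d + s <= d1 ->
  (forall y, y < c \/ d < y -> G y = 0) ->
  (forall y, continuous G y) ->
  (forall z, c1 - 2 * s <= z <= d1 + 2 * s -> continuous F z) ->
  RInt (fun t => F t * sym_quot2 G t s) c1 d1 = RInt (fun t => sym_quot2 F t s * G t) c1 d1.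
Proof.
  intros Hs H1 H2 H3 HG HGc HF.
  assert (Es : Rabs s = s) by (apply Rabs_pos_eq; lra).
  assert (Es' : Rabs (-s) = s) by (rewrite Rabs_Ropp; auto).
  assert (HF' : forall z, c1 <= z <= d1 -> continuous F z) by (intros; apply HF; lra).
  rewrite (Rint_ext _ (fun t => (/ s ^ 2) * (F t * G (t + s) + F t * G (t + - s) - 2 * (F t * G t)))).
  2: { intros x _. unfold sym_quot2. replace (x - s) with (x + - s) by ring. field. lra. }
  rewrite (Rint_ext (fun t => sym_quot2 F t s * G t) (fun t => (/ s ^ 2) * (F (t - s) * G t + F (t - - s) * G t - 2 * (F t * G t)))).
  2: { intros x _. unfold sym_quot2. replace (x - - s) with (x + s) by ring. field. lra. }
  rewrite !lin3.
  rewrite (shift_int F G c d c1 d1 s), (shift_int F G c d c1 d1 (-s)); auto; try rewrite Es'; try rewrite Es; auto; lra.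
  all: first [ apply (exR _ c1 d1); [lra|lra|intros z Hz; repeat first [apply cmul | apply cshift | apply cshift']; auto; apply HF; lra] | idtac ].
Qed.


Ltac ctac := unfold sym_quot2, Rdiv; repeat match goal with
 | |- continuous (fun t => @?A t * @?B t) _ => apply (cmul A B)
 | |- continuous (fun t => @?A t + @?B t) _ => apply (cplus A B)
 | |- continuous (fun t => @?A t - @?B t) _ => apply (cminus A B)
 | |- continuous (fun t => ?F (t + ?u)) _ => apply (cshift F u)
 | |- continuous (fun t => ?F (t - ?u)) _ => apply (cshift' F u)
 | |- continuous (fun t => t) _ => apply cid
 | |- continuous (fun _ => ?c) _ => apply cconst
 end.

Lemma alg1 (x y : R) : x = y + (x - y).
Proof. ring. Qed.

Lemma le_eps x y K : 0 <= K -> (forall eps, 0 < eps -> x <= y + eps * K) -> x <= y.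
Proof.
  intros HK H. apply Rnot_lt_le. intros Hlt.
  assert (He : 0 < (x - y) / (2 * (K + 1))) by (apply Rdiv_lt_0_compat; lra).
  specialize (H _ He).
  assert ((x - y) / (2 * (K + 1)) * K < x - y).
  { apply Rmult_lt_reg_r with (2 * (K + 1)). lra. field_simplify; try lra. nra. }
  lra.
Qed.

Lemma D2_supp (phi : R -> R) c d : (forall y, y < c \/ d < y -> phi y = 0) ->
  forall t, t < c \/ d < t -> Derive_n phi 2 t = 0.
Proof.
  intros H t Ht.
  rewrite (Derive_n_ext_loc phi (fun _ => 0)). apply (Derive_n_const 1).
  destruct Ht as [Ht|Ht].
  - apply (loc_ball _ _ (c - t)). lra. intros y Hy. apply H. left. sabs.
  - apply (loc_ball _ _ (t - d)). lra. intros y Hy. apply H. right. sabs.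
Qed.

Lemma int_supp (F Z : R -> R) c d c1 d1 : c1 <= c -> c <= d -> d <= d1 ->
  (forall t, t < c \/ d < t -> Z t = 0) ->
  (forall z, c1 <= z <= d1 -> continuous (fun t => F t * Z t) z) ->
  RInt (fun t => F t * Z t) c d = RInt (fun t => F t * Z t) c1 d1.
Proof.
  intros H1 H2 H3 HZ HC.
  assert (EX : forall p q, c1 <= p <= d1 -> c1 <= q <= d1 -> ex_RInt (fun t => F t * Z t) p q).
  { intros p q Hp Hq. apply (exR _ c1 d1); auto. }
  assert (Z1 : RInt (fun t => F t * Z t) c1 c = 0).
  { apply Rint_zero. intros x Hx. rewrite Rmax_right in Hx by lra. rewrite HZ. ring. lra. }
  assert (Z2 : RInt (fun t => F t * Z t) d d1 = 0).
  { apply Rint_zero. intros x Hx. rewrite Rmin_left in Hx by lra. rewrite HZ. ring. lra. }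
  assert (C1 := Rint_chasles _ c1 c d (EX c1 c ltac:(lra) ltac:(lra)) (EX c d ltac:(lra) ltac:(lra))).
  assert (C2 := Rint_chasles _ c1 d d1 (EX c1 d ltac:(lra) ltac:(lra)) (EX d d1 ltac:(lra) ltac:(lra))).
  lra.
Qed.

Lemma unif_T (phi : R -> R) : sm phi -> forall c1 d1, c1 <= d1 -> forall eps, 0 < eps ->
  exists s2, 0 < s2 /\ forall t s, c1 <= t <= d1 -> 0 < s < s2 ->
   Rabs (sym_quot2 phi t s - Derive_n phi 2 t) <= eps.
Proof.
  intros Hsm c1 d1 Hcd eps He.
  assert (HU := Heine (Derive_n phi 2) (fun z => c1 - 1 <= z <= d1 + 1) (compact_P3 _ _)
     (fun z _ => cont_pt _ _ (sm_D2_cont phi Hsm z))).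
  destruct (HU (mkposreal eps He)) as [del Hdel]. simpl in Hdel.
  exists (Rmin del 1). split. apply Rmin_pos; [apply cond_pos|lra].
  intros t s Ht Hs.
  assert (s < del) by (generalize (Rmin_l del 1); lra).
  assert (s < 1) by (generalize (Rmin_r del 1); lra).
  destruct (TL2 phi t 2 s ltac:(lra) (fun n y _ => Hsm n y)) as [z1 [z2 [Hz1 [Hz2 EQ]]]].
  rewrite EQ.
  assert (Rabs (Derive_n phi 2 z1 - Derive_n phi 2 t) < eps) by (apply Hdel; sabs).
  assert (Rabs (Derive_n phi 2 z2 - Derive_n phi 2 t) < eps) by (apply Hdel; sabs).
  sabs.
Qed.

Section Main.
Variables (a b : Rbar) (f g : R -> R).
Hypothesis Hfc : forall x, in_open_interval a b x -> continuous f x.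
Hypothesis Hgc : forall y, image_on a b f y ->
     filterlim g (within (image_on a b f) (locally y)) (locally (g y)).
Let h := fun t => g (f t).

Lemma unif_Q : (forall x, in_open_interval a b x -> P3 f h x) ->
  forall c0 d0, in_open_interval a b c0 -> in_open_interval a b d0 -> c0 <= d0 ->
  forall eps, 0 < eps -> exists s1, 0 < s1 /\ forall y s, c0 <= y - s -> y + s <= d0 -> 0 < s < s1 ->
    sym_quot2 f y s <= h y + eps.
Proof.
  intros HP c0 d0 Hc0 Hd0 Hcd eps He.
  assert (HI : forall z, c0 <= z <= d0 -> in_open_interval a b z) by (intros z Hz; apply (I_seg a b c0 d0 z); auto).
  assert (HU := Heine h (fun z => c0 <= z <= d0) (compact_P3 _ _)
     (fun z Hz => cont_pt _ _ (hc a b f g Hfc Hgc z (HI z Hz)))).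
  assert (He2 : 0 < eps / 2) by lra.
  destruct (HU (mkposreal _ He2)) as [del Hdel]. simpl in Hdel.
  exists del. split. apply cond_pos.
  intros y s Hy1 Hy2 Hs.
  set (A := h y + eps / 2).
  assert (E := Q_sub_quad f A y s (proj1 Hs)).
  cut (sym_quot2 (fun u => f u - A * u ^ 2 / 2) y s <= 0). intros; unfold A in *; lra.
  apply mid_P3. lra.
  - intros z Hz. apply (cminus f (fun u => A * u ^ 2 / 2)).
    apply Hfc. apply HI. lra.
    apply (ex_derive_continuous (fun u => A * u ^ 2 / 2)). auto_derive; auto.
  - intros z Hz.
    assert (Hhz : Rabs (h y - h z) < eps / 2) by (apply Hdel; try lra; sabs).
    assert (Hp : 0 < (A - h z) / 2) by (unfold A; sabs).
    destruct (HP z (HI z ltac:(lra)) _ Hp) as [d [Hd Hd']].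
    exists d. split; auto. intros t Ht.
    rewrite Q_sub_quad by lra. specialize (Hd' t Ht). lra.
Qed.

Lemma P3_distr : (forall x, in_open_interval a b x -> P3 f h x) -> distrib_sub a b f g.
Proof.
  intros HP phi c d Hac Hcd Hdb Hsm Hsupp Hpos.
  assert (HcI : in_open_interval a b c) by (split; auto; eapply Rbar_le_lt_trans; [|apply Hdb]; simpl; lra).
  assert (HdI : in_open_interval a b d) by (split; auto; eapply Rbar_lt_le_trans; [apply Hac|]; simpl; lra).
  destruct (I_ball _ _ _ HcI) as [rc [Hrc Hrc']].
  destruct (I_ball _ _ _ HdI) as [rd [Hrd Hrd']].
  set (s0 := Rmin rc rd / 4).
  assert (Hs0 : 0 < s0) by (unfold s0; generalize (Rmin_pos _ _ Hrc Hrd); lra).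
  assert (Hs0c : 4 * s0 <= rc) by (unfold s0; generalize (Rmin_l rc rd); lra).
  assert (Hs0d : 4 * s0 <= rd) by (unfold s0; generalize (Rmin_r rc rd); lra).
  assert (HloI : in_open_interval a b (c - 4 * s0)) by (apply Hrc'; sabs).
  assert (HhiI : in_open_interval a b (d + 4 * s0)) by (apply Hrd'; sabs).
  assert (HI : forall z, c - 4 * s0 <= z <= d + 4 * s0 -> in_open_interval a b z)
    by (intros z Hz; apply (I_seg a b (c - 4 * s0) (d + 4 * s0) z); auto).
  assert (Hfz : forall z, c - 4 * s0 <= z <= d + 4 * s0 -> continuous f z) by (intros; apply Hfc, HI; auto).
  assert (Hhz : forall z, c - 4 * s0 <= z <= d + 4 * s0 -> continuous h z)
    by (intros; apply (hc a b f g Hfc Hgc), HI; auto).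
  assert (Hpc : forall x, continuous phi x) by (apply sm_cont; exact Hsm).
  assert (Hp2c : forall x, continuous (Derive_n phi 2) x) by (apply sm_D2_cont; exact Hsm).
  set (c1 := c - s0). set (d1 := d + s0).
  rewrite (int_supp f (Derive_n phi 2) c d c1 d1); try (unfold c1, d1; lra).
  2: apply D2_supp; auto.
  2: { intros z Hz. apply cmul; auto. apply Hfz. unfold c1, d1 in Hz; lra. }
  rewrite (int_supp (fun t => g (f t)) phi c d c1 d1); try (unfold c1, d1; lra); auto.
  2: { intros z Hz. apply cmul; auto. apply Hhz. unfold c1, d1 in Hz; lra. }
  destruct (continuity_ab_maj (fun t => Rabs (f t)) c1 d1) as [Mx [HMx _]]. unfold c1, d1; lra.
  { intros z Hz. apply cont_pt. apply cabs. apply Hfz. unfold c1, d1 in Hz; lra. }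
  set (Mf := Rabs (f Mx)).
  assert (HMf : 0 <= Mf) by apply Rabs_pos.
  assert (EXc : forall F : R -> R, (forall z, c1 - 2 * s0 <= z <= d1 + 2 * s0 -> continuous F z) -> ex_RInt F c1 d1).
  { intros F HF. apply (exR F (c1 - 2 * s0) (d1 + 2 * s0)); try (unfold c1, d1; lra). auto. }
  apply (le_eps _ _ (RInt phi c1 d1 + Mf * (d1 - c1))).
  { apply Rplus_le_le_0_compat. apply RInt_ge_0. unfold c1, d1; lra.
    apply EXc; auto. intros; auto. apply Rmult_le_pos; unfold c1, d1 in *; lra. }
  intros eps He.
  destruct (unif_Q HP (c - 2 * s0) (d + 2 * s0) ltac:(apply HI; lra) ltac:(apply HI; lra) ltac:(lra) eps He)
    as [s1 [Hs1 Hs1']].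
  destruct (unif_T phi Hsm c1 d1 ltac:(unfold c1, d1; lra) eps He) as [s2 [Hs2 Hs2']].
  set (s := Rmin s0 (Rmin s1 s2) / 2).
  assert (Hs : 0 < s) by (unfold s; generalize (Rmin_pos _ _ Hs0 (Rmin_pos _ _ Hs1 Hs2)); lra).
  assert (s < s0 /\ s < s1 /\ s < s2) as [T0 [T1 T2]].
  { unfold s. generalize (Rmin_l s0 (Rmin s1 s2)) (Rmin_r s0 (Rmin s1 s2)) (Rmin_l s1 s2) (Rmin_r s1 s2). lra. }
  assert (E1 : @eq R (RInt (fun t => f t * Derive_n phi 2 t) c1 d1)
    (RInt (fun t => f t * sym_quot2 phi t s) c1 d1 + RInt (fun t => f t * (Derive_n phi 2 t - sym_quot2 phi t s)) c1 d1)).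
  { rewrite (Rint_ext (fun t => f t * (Derive_n phi 2 t - sym_quot2 phi t s))
       (fun t => f t * Derive_n phi 2 t - f t * sym_quot2 phi t s)).
    rewrite Rint_minus. apply alg1.
    all: try (intros; ring).
    all: apply EXc; intros z Hz; ctac; auto; apply Hfz; unfold c1, d1 in Hz; lra. }
  assert (B1 : RInt (fun t => f t * (Derive_n phi 2 t - sym_quot2 phi t s)) c1 d1 <= eps * (Mf * (d1 - c1))).
  { replace (eps * (Mf * (d1 - c1))) with ((d1 - c1) * (Mf * eps)) by ring.
    rewrite <- Rint_const. apply RInt_le. unfold c1, d1; lra.
    apply EXc; intros z Hz; ctac; auto; apply Hfz; unfold c1, d1 in Hz; lra.
    apply EXc; intros; apply cconst.
    intros t Ht.
    assert (Rabs (sym_quot2 phi t s - Derive_n phi 2 t) <= eps) by (apply Hs2'; lra).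
    assert (Rabs (f t) <= Mf) by (apply HMx; lra).
    apply Rle_trans with (Rabs (f t) * Rabs (Derive_n phi 2 t - sym_quot2 phi t s)).
    rewrite <- Rabs_mult. apply Rle_abs.
    apply Rmult_le_compat; try apply Rabs_pos; auto. rewrite Rabs_minus_sym. auto. }
  rewrite (Q_int f phi c d c1 d1 s) in E1; try (unfold c1, d1; lra); auto.
  2: { intros z Hz. apply Hfz. unfold c1, d1 in Hz. lra. }
  assert (B2 : RInt (fun t => sym_quot2 f t s * phi t) c1 d1 <=
     RInt (fun t => g (f t) * phi t) c1 d1 + eps * RInt phi c1 d1).
  { rewrite <- Rint_scal, <- Rint_plus.
    apply RInt_le. unfold c1, d1; lra.
    all: try (apply EXc; intros z Hz; ctac; auto; first [apply Hfz | apply Hhz]; unfold c1, d1 in Hz; lra).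
    intros t Ht.
    assert (sym_quot2 f t s <= h t + eps).
    { apply Hs1'; unfold c1, d1 in Ht; lra. }
    unfold h in H. specialize (Hpos t). nra. }
  lra.
Qed.

End Main.


Lemma sum_nonneg (u : nat -> R) n : (forall k, 0 <= u k) -> 0 <= sum_f_R0 u n.
Proof. intros H. induction n; simpl. apply H. specialize (H (S n)). lra. Qed.

Lemma exp_big y k : 0 <= y -> y ^ (S k) / INR (Factorial.fact (S k)) <= exp y.
Proof.
  intros Hy. eapply Rle_trans; [|apply (exp_ge_taylor y (S k) Hy)].
  rewrite tech5.
  assert (0 <= sum_f_R0 (fun k0 => y ^ k0 / INR (Factorial.fact k0)) k).
  { apply sum_nonneg. intros j. apply Rdiv_le_0_compat. apply pow_le; auto. apply INR_fact_lt_0. }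
  lra.
Qed.

Lemma exp_flat k : forall eps, 0 < eps -> exists d, 0 < d /\
  forall s, 0 < s < d -> exp (- / s) / s ^ k < eps.
Proof.
  intros eps He.
  set (F := INR (Factorial.fact (S k))).
  assert (HF : 0 < F) by apply INR_fact_lt_0.
  exists (eps / F). split. apply Rdiv_lt_0_compat; auto.
  intros s Hs.
  assert (Hx := exp_big (/ s) k ltac:(left; apply Rinv_0_lt_compat; lra)).
  set (X := exp (/ s)) in *.
  assert (HX : 0 < X) by apply exp_pos.
  assert (Hsk : 0 < s ^ k) by (apply pow_lt; lra).
  assert (E1 : (/ s) ^ S k * s ^ S k = 1).
  { rewrite <- Rpow_mult_distr. rewrite Rinv_l by lra. apply pow1. }
  assert (H2 : / F <= X * s ^ S k).
  { apply Rmult_le_compat_r with (r := s ^ S k) in Hx. 2: { left; apply pow_lt; lra. }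
    unfold Rdiv in Hx. rewrite Rmult_comm in Hx. rewrite <- Rmult_assoc in Hx.
    rewrite (Rmult_comm (s ^ S k)) in Hx. rewrite E1 in Hx. unfold F; lra. }
  rewrite exp_Ropp. fold X.
  assert (E2 : / X / s ^ k = s / (X * s ^ S k)) by (simpl; field; split; lra).
  rewrite E2.
  assert (HXs : 0 < X * s ^ S k) by (apply Rmult_lt_0_compat; auto; apply pow_lt; lra).
  apply Rle_lt_trans with (s * F).
  { unfold Rdiv. apply Rmult_le_compat_l. lra.
    replace F with (/ / F) by (field; lra). apply Rinv_le_contravar; auto. apply Rinv_0_lt_compat; auto. }
  apply Rmult_lt_reg_r with (/ F). apply Rinv_0_lt_compat; auto.
  replace (s * F * / F) with s by (field; lra). unfold Rdiv in Hs. lra.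
Qed.

Inductive poly_fun : (R -> R) -> Prop :=
| pf_const c : poly_fun (fun _ => c)
| pf_id : poly_fun (fun x => x)
| pf_plus p q : poly_fun p -> poly_fun q -> poly_fun (fun x => p x + q x)
| pf_mult p q : poly_fun p -> poly_fun q -> poly_fun (fun x => p x * q x).

Lemma pf_ext p q : poly_fun p -> (forall x, p x = q x) -> poly_fun q.
Proof. intros H E. replace q with p; auto. apply functional_extensionality; auto. Qed.

Lemma pf_deriv p : poly_fun p -> exists dp, poly_fun dp /\ forall x, is_derive p x (dp x).
Proof.
  induction 1.
  - exists (fun _ => 0). split. constructor. intros x. auto_derive; auto.
  - exists (fun _ => 1). split. constructor. intros x. auto_derive; auto.
  - destruct IHpoly_fun1 as [dp [Hd1 Hd1']]. destruct IHpoly_fun2 as [dq [Hd2 Hd2']].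
    exists (fun x => dp x + dq x). split. constructor; auto.
    intros x. apply (is_derive_plus p q x (dp x) (dq x)); auto.
  - destruct IHpoly_fun1 as [dp [Hd1 Hd1']]. destruct IHpoly_fun2 as [dq [Hd2 Hd2']].
    exists (fun x => dp x * q x + p x * dq x). split.
    constructor; constructor; auto.
    intros x. apply (is_derive_mult p q x (dp x) (dq x)); auto. intros; apply Rmult_comm.
Qed.

Lemma pf_cont p : poly_fun p -> forall x, continuous p x.
Proof.
  intros H x. destruct (pf_deriv p H) as [dp [_ Hd]].
  apply (ex_derive_continuous p x). exists (dp x). auto.
Qed.

Lemma pf_bound p y : poly_fun p -> exists B, 0 < B /\ forall z, Rabs (z - y) <= 1 -> Rabs (p z) <= B.
Proof.
  intros H.
  destruct (continuity_ab_maj (fun t => Rabs (p t)) (y - 1) (y + 1)) as [Mx [HM _]]. lra.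
  { intros c _. apply cont_pt. apply cabs. apply pf_cont; auto. }
  exists (Rabs (p Mx) + 1). split. generalize (Rabs_pos (p Mx)); lra.
  intros z Hz. assert (Rabs (p z) <= Rabs (p Mx)) by (apply HM; apply Rabs_le_between' in Hz; lra). lra.
Qed.

Lemma D_shift (K F : R -> R) : (forall x, is_derive K x (F x)) ->
  forall n x, Derive_n K (S n) x = Derive_n F n x.
Proof.
  intros H n. induction n; intros x.
  - simpl. apply is_derive_unique. apply H.
  - change (Derive (Derive_n K (S n)) x = Derive (Derive_n F n) x).
    apply Derive_ext. auto.
Qed.

Lemma deriv_step (K F : R -> R) : (forall x, is_derive K x (F x)) ->
  forall n x, ex_derive_n F n x -> ex_derive_n K (S n) x.
Proof.
  intros H n x Hn. destruct n.
  - simpl. exists (F x). apply H.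
  - change (ex_derive (Derive_n K (S n)) x). change (ex_derive (Derive_n F n) x) in Hn.
    eapply ex_derive_ext; [|apply Hn]. intros t. symmetry. apply D_shift; auto.
Qed.

Lemma sm_from_deriv (K F : R -> R) : (forall x, is_derive K x (F x)) -> sm F -> sm K.
Proof. intros H HF n x. destruct n. simpl; auto. apply (deriv_step K F); auto. Qed.

Section Bump.
Variable e : R.
Hypothesis He : 0 < e.

Definition sq (y : R) := e * e - y * y.

Definition bc (q : R -> R) (m : nat) (y : R) : R :=
  if Rlt_dec 0 (sq y) then q y * exp (- / sq y) / (sq y) ^ m else 0.

Lemma sq_cont y : continuous sq y.
Proof. apply (ex_derive_continuous sq y). unfold sq. auto_derive; auto. Qed.

Lemma bc_deriv q m : poly_fun q -> exists q', poly_fun q' /\ forall y, is_derive (bc q m) y (bc q' (m + 2) y).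
Proof.
  intros Hq. destruct (pf_deriv q Hq) as [dq [Hdq Hdq']].
  set (q' := fun y => dq y * (sq y * sq y) - 2 * y * q y + 2 * INR m * y * q y * sq y).
  assert (Hsq : poly_fun sq).
  { apply pf_ext with (fun y => e * e + (-1) * (y * y)). repeat constructor. intros; unfold sq; ring. }
  exists q'. split.
  { unfold q'. apply pf_ext with (fun y => dq y * (sq y * sq y) + ((-2) * y * q y + 2 * INR m * y * q y * sq y)).
    repeat (constructor; auto). intros; ring. }
  intros y.
  destruct (Rtotal_order 0 (sq y)) as [Hpos|[Hz|Hneg]].
  -
    destruct (cont_ed sq y (sq_cont y) (sq y) Hpos) as [r [Hr Hr']].
    apply is_derive_ext_loc with (fun u => q u * exp (- / sq u) / (sq u) ^ m).
    { apply (loc_ball _ _ r Hr). intros u Hu. specialize (Hr' u Hu). unfold bc.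
      destruct (Rlt_dec 0 (sq u)); auto. exfalso. sabs. }
    unfold bc. destruct (Rlt_dec 0 (sq y)); [|lra].
    unfold sq. auto_derive.
    + split; [exists (dq y); apply Hdq'|]. split; [unfold sq in *; lra|]. split; [apply pow_nonzero; unfold sq in *; lra|exact I].
    + replace (Derive (fun x => q x) y) with (dq y) by (symmetry; apply is_derive_unique; apply Hdq'). unfold q'. fold (sq y).
      replace (e * e + - (y * y)) with (sq y) by (unfold sq; ring).
      destruct m as [|m'].
      * simpl. field. lra.
      * simpl pred. rewrite !Nat.add_succ_l. simpl pow. rewrite S_INR. rewrite pow_add. simpl pow. field. split. lra. apply pow_nonzero; lra.
  -
    apply is_derive_Reals. intros eps Heps.
    unfold bc at 2. destruct (Rlt_dec 0 (sq y)); [lra|].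
    destruct (pf_bound q y Hq) as [B [HB HB']].
    assert (Hy : Rabs y = e).
    { unfold sq in Hz. assert (y * y = e * e) by lra.
      destruct (Rle_or_lt 0 y). rewrite Rabs_pos_eq by lra. nra. rewrite Rabs_left by lra. nra. }
    set (L := 2 * e + 1).
    assert (HL : 0 < L) by (unfold L; lra).
    destruct (exp_flat (S m) (eps / (B * L)) ltac:(apply Rdiv_lt_0_compat; nra)) as [d0 [Hd0 Hd0']].
    exists (mkposreal (Rmin 1 (d0 / L)) (Rmin_pos 1 (d0 / L) Rlt_0_1 (Rdiv_lt_0_compat _ _ Hd0 HL))).
    intros hh Hh0 Hh. simpl in Hh.
    assert (Hh1 : Rabs hh < 1) by (generalize (Rmin_l 1 (d0 / L)); lra).
    assert (Hh2 : Rabs hh < d0 / L) by (generalize (Rmin_r 1 (d0 / L)); lra).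
    unfold bc. destruct (Rlt_dec 0 (sq y)); [lra|].
    destruct (Rlt_dec 0 (sq (y + hh))) as [Hp|Hp].
    2: { replace ((0 - 0) / hh - 0) with 0 by (field; lra). rewrite Rabs_R0; lra. }
    set (sg := sq (y + hh)) in *.
    assert (Esg : sg = - hh * (2 * y + hh)) by (unfold sg, sq; unfold sq in Hz; nra).
    assert (Hsg : sg <= Rabs hh * L).
    { rewrite Esg. unfold L. rewrite <- Hy.
      apply Rle_trans with (Rabs (- hh * (2 * y + hh))). apply Rle_abs.
      rewrite Rabs_mult, Rabs_Ropp. apply Rmult_le_compat_l. apply Rabs_pos.
      eapply Rle_trans. apply Rabs_triang. rewrite Rabs_mult, (Rabs_pos_eq 2) by lra. lra. }
    assert (Hsg0 : sg < d0).
    { apply Rle_lt_trans with (Rabs hh * L); auto.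
      apply Rmult_lt_reg_r with (/ L). apply Rinv_0_lt_compat; auto.
      rewrite Rmult_assoc, Rinv_r, Rmult_1_r by lra. exact Hh2. }
    specialize (Hd0' sg (conj Hp Hsg0)).
    assert (Hqb : Rabs (q (y + hh)) <= B) by (apply HB'; replace (y + hh - y) with hh by ring; lra).
    assert (Hex : 0 < exp (- / sg)) by apply exp_pos.
    assert (Hpw : 0 < sg ^ m) by (apply pow_lt; lra).
    assert (Hhp : 0 < Rabs hh) by (apply Rabs_pos_lt; auto).
    replace ((q (y + hh) * exp (- / sg) / sg ^ m - 0) / hh - 0) with
      (q (y + hh) * (exp (- / sg) / sg ^ m / hh)) by (field; split; lra).
    rewrite Rabs_mult.
    apply Rle_lt_trans with (B * Rabs (exp (- / sg) / sg ^ m / hh)).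
    apply Rmult_le_compat_r; auto. apply Rabs_pos.
    rewrite Rabs_div by lra. rewrite Rabs_pos_eq.
    2: { apply Rdiv_le_0_compat; lra. }
    apply Rle_lt_trans with (B * (L * (exp (- / sg) / sg ^ S m))).
    { apply Rmult_le_compat_l. lra.
      (* exp/sg^m/|h| <= L exp / sg^(S m) since sg <= |h| L *)
      simpl pow. unfold Rdiv.
      rewrite Rinv_mult. 
      replace (L * (exp (- / sg) * (/ sg * / sg ^ m))) with ((exp (- / sg) * / sg ^ m) * (L * / sg)) by ring.
      apply Rmult_le_compat_l. apply Rmult_le_pos; [lra|left; apply Rinv_0_lt_compat; auto].
      apply Rmult_le_reg_r with (Rabs hh * sg). apply Rmult_lt_0_compat; lra.
      replace (/ Rabs hh * (Rabs hh * sg)) with sg by (field; lra).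
      replace (L * / sg * (Rabs hh * sg)) with (Rabs hh * L) by (field; lra). lra. }
    replace eps with (B * (L * (eps / (B * L)))) by (field; lra).
    apply Rmult_lt_compat_l. lra. apply Rmult_lt_compat_l. lra. auto.
  -
    destruct (cont_ed sq y (sq_cont y) (- sq y) ltac:(lra)) as [r [Hr Hr']].
    apply is_derive_ext_loc with (fun _ => 0).
    { apply (loc_ball _ _ r Hr). intros u Hu. specialize (Hr' u Hu). unfold bc.
      destruct (Rlt_dec 0 (sq u)); auto. exfalso. sabs. }
    unfold bc. destruct (Rlt_dec 0 (sq y)); [lra|].
    auto_derive; auto.
Qed.

Lemma bc_sm : forall n q m, poly_fun q -> forall x, ex_derive_n (bc q m) n x.
Proof.
  induction n; intros q m Hq x. simpl; auto.
  destruct (bc_deriv q m Hq) as [q' [Hq' Hd]].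
  apply (deriv_step _ _ Hd). apply IHn; auto.
Qed.

Definition rho := bc (fun _ => 1) 0.

Lemma rho_sm : sm rho.
Proof. intros n x. apply bc_sm. constructor. Qed.

Lemma rho_cont x : continuous rho x.
Proof. apply sm_cont. apply rho_sm. Qed.

Lemma rho_nonneg y : 0 <= rho y.
Proof.
  unfold rho, bc. destruct (Rlt_dec 0 (sq y)). simpl. rewrite Rmult_1_l, Rdiv_1_r. left; apply exp_pos. lra.
Qed.

Lemma rho_out y : e <= Rabs y -> rho y = 0.
Proof.
  intros H. unfold rho, bc. destruct (Rlt_dec 0 (sq y)); auto. exfalso.
  unfold sq in r. assert (e * e <= Rabs y * Rabs y) by nra.
  rewrite <- Rabs_mult, Rabs_pos_eq in H0 by nra. lra.
Qed.

Lemma rho_pos y : Rabs y < e -> 0 < rho y.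
Proof.
  intros H. unfold rho, bc. destruct (Rlt_dec 0 (sq y)).
  simpl. rewrite Rmult_1_l, Rdiv_1_r. apply exp_pos.
  exfalso. apply n. unfold sq.
  assert (Rabs y * Rabs y < e * e) by (apply Rmult_le_0_lt_compat; auto; apply Rabs_pos).
  rewrite <- Rabs_mult, Rabs_pos_eq in H0 by nra. lra.
Qed.

End Bump.


Lemma isd_eq (f : R -> R) x l l' : is_derive f x l -> l = l' -> is_derive f x l'.
Proof. intros H <-; auto. Qed.
Lemma isd_shift (K F : R -> R) p x : (forall y, is_derive K y (F y)) -> is_derive (fun x => K (x - p)) x (F (x - p)).
Proof. intros H. assert (H2 := is_derive_comp K (fun u => u - p) x (F (x - p)) 1 (H _) ltac:(auto_derive; auto; ring)).
 apply (isd_eq _ _ _ _ H2). apply Rmult_1_l. Qed.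
Lemma isd3 (A B C : R -> R) x la lb lc : is_derive A x la -> is_derive B x lb -> is_derive C x lc ->
  is_derive (fun x => A x + B x - 2 * C x) x (la + lb - 2 * lc).
Proof. intros HA HB HC. apply (is_derive_minus (fun x => A x + B x) (fun x => 2 * C x)).
 apply (is_derive_plus A B); auto. apply is_derive_scal; auto. Qed.

Lemma exR_all (F : R -> R) p q : (forall z, continuous F z) -> ex_RInt F p q.
Proof. intros H. apply (@ex_RInt_continuous R_CompleteNormedModule F p q). intros; auto. Qed.

Lemma isd_RInt (F : R -> R) p : (forall z, continuous F z) -> forall x, is_derive (fun x => RInt F p x) x (F x).
Proof.
  intros H x. apply (is_derive_RInt F (fun x => RInt F p x) p x); auto.
  apply filter_forall. intros y. apply (RInt_correct F p y). apply exR_all; auto.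
Qed.

Section Bump2.
Variable e : R.
Hypothesis He : 0 < e.

Let rh := rho e.
Definition Fr (x : R) : R := RInt rh (-e) x.
Definition Kr (x : R) : R := RInt Fr (-e) x.
Definition Mr : R := Fr e.

Lemma rh_cont x : continuous rh x.
Proof. apply rho_cont; auto. Qed.

Lemma rh_out y : e <= Rabs y -> rh y = 0.
Proof. intros H. apply rho_out; auto. Qed.

Lemma Fr_deriv x : is_derive Fr x (rh x).
Proof. apply isd_RInt. apply rh_cont. Qed.

Lemma Fr_cont x : continuous Fr x.
Proof. apply (ex_derive_continuous Fr x). exists (rh x). apply Fr_deriv. Qed.

Lemma Kr_deriv x : is_derive Kr x (Fr x).
Proof. apply isd_RInt. apply Fr_cont. Qed.

Lemma Fr_left x : x <= -e -> Fr x = 0.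
Proof.
  intros H. apply Rint_zero. intros y Hy. apply rho_out; auto.
  assert (y < Rmax (- e) x) by apply Hy. rewrite Rmax_left in H0 by lra. sabs.
Qed.

Lemma Fr_chasles x y : Fr y = Fr x + RInt rh x y.
Proof. unfold Fr. symmetry. apply Rint_chasles; apply exR_all; apply rh_cont. Qed.

Lemma Fr_right x : e <= x -> Fr x = Mr.
Proof.
  intros H. unfold Mr. rewrite (Fr_chasles e x).
  rewrite (Rint_zero _ e x). ring. intros y Hy. apply rho_out; auto.
  assert (Rmin e x < y) by apply Hy. rewrite Rmin_left in H0 by lra. sabs.
Qed.

Lemma Mr_pos : 0 < Mr.
Proof.
  unfold Mr, Fr. apply RInt_gt_0. lra. intros x Hx. apply rho_pos; auto. sabs.
  intros; apply rh_cont.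
Qed.

Lemma Fr_ge0 x : 0 <= Fr x.
Proof.
  destruct (Rle_or_lt x (-e)). rewrite Fr_left; lra.
  apply RInt_ge_0. lra. apply exR_all, rh_cont. intros; apply rho_nonneg.
Qed.

Lemma Fr_leM x : Fr x <= Mr.
Proof.
  destruct (Rle_or_lt e x). rewrite Fr_right; lra.
  unfold Mr. rewrite (Fr_chasles x e).
  assert (0 <= RInt rh x e). apply RInt_ge_0. lra. apply exR_all, rh_cont. intros; apply rho_nonneg.
  lra.
Qed.

Lemma Kr_chasles x y : Kr y = Kr x + RInt Fr x y.
Proof. unfold Kr. symmetry. apply Rint_chasles; apply exR_all; apply Fr_cont. Qed.

Lemma Kr_left x : x <= -e -> Kr x = 0.
Proof.
  intros H. apply Rint_zero. intros y Hy. apply Fr_left.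
  assert (y < Rmax (- e) x) by apply Hy. rewrite Rmax_left in H0 by lra. lra.
Qed.

Lemma Kr_ge0 x : 0 <= Kr x.
Proof.
  destruct (Rle_or_lt x (-e)). rewrite Kr_left; lra.
  apply RInt_ge_0. lra. apply exR_all, Fr_cont. intros; apply Fr_ge0.
Qed.

Lemma Kr_up y : -e <= y -> Kr y <= Mr * (y + e).
Proof.
  intros H. unfold Kr. replace (Mr * (y + e)) with ((y - - e) * Mr) by ring.
  rewrite <- Rint_const. apply RInt_le; auto. apply exR_all, Fr_cont. apply exR_all; intros; apply cconst.
  intros; apply Fr_leM.
Qed.

Definition Cr := Kr e - Mr * e.

Lemma Kr_lin y : e <= y -> Kr y = Mr * y + Cr.
Proof.
  intros H. rewrite (Kr_chasles e y). unfold Cr.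
  rewrite (Rint_ext _ (fun _ => Mr)). rewrite Rint_const. ring.
  intros x Hx. apply Fr_right. assert (Rmin e y < x) by apply Hx. rewrite Rmin_left in H0 by lra. lra.
Qed.

Lemma Kr_low y : Mr * y + Cr <= Kr y.
Proof.
  destruct (Rle_or_lt e y). rewrite Kr_lin; lra.
  unfold Cr. rewrite (Kr_chasles y e).
  assert (RInt Fr y e <= (e - y) * Mr).
  { rewrite <- Rint_const. apply RInt_le. lra. apply exR_all, Fr_cont. apply exR_all; intros; apply cconst.
    intros; apply Fr_leM. }
  nra.
Qed.

Lemma Cr_bounds : - (Mr * e) <= Cr <= Mr * e.
Proof.
  unfold Cr. split. generalize (Kr_ge0 e); lra.
  assert (Kr e <= Mr * (e + e)) by (apply Kr_up; lra). lra.
Qed.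

Variables (m t : R).
Hypothesis Ht : 4 * e <= t.

Definition psi x := Kr (x - (m - t)) + Kr (x - (m + t)) - 2 * Kr (x - m).
Definition psi1 x := Fr (x - (m - t)) + Fr (x - (m + t)) - 2 * Fr (x - m).
Definition psi2 x := rh (x - (m - t)) + rh (x - (m + t)) - 2 * rh (x - m).

Lemma psi_deriv x : is_derive psi x (psi1 x).
Proof. apply isd3; apply isd_shift; apply Kr_deriv. Qed.
Lemma psi1_deriv x : is_derive psi1 x (psi2 x).
Proof. apply isd3; apply isd_shift; apply Fr_deriv. Qed.

Lemma sm_shift F p : sm F -> sm (fun x => F (x - p)).
Proof. intros H. apply (sm_ext (fun x => F (x + - p))). apply sm_trans; auto. intros; reflexivity. Qed.

Lemma psi2_sm : sm psi2.
Proof.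
  unfold psi2. apply sm_minus. apply sm_plus; apply sm_shift; apply rho_sm; auto.
  apply sm_scal. apply sm_shift; apply rho_sm; auto.
Qed.

Lemma psi_sm : sm psi.
Proof.
  apply (sm_from_deriv psi psi1). apply psi_deriv.
  apply (sm_from_deriv psi1 psi2). apply psi1_deriv. apply psi2_sm.
Qed.

Lemma psi_D2 x : Derive_n psi 2 x = psi2 x.
Proof.
  rewrite (D_shift psi psi1 psi_deriv 1 x). rewrite (D_shift psi1 psi2 psi1_deriv 0 x). reflexivity.
Qed.

Lemma psi_left x : x <= m - t - e -> psi x = 0.
Proof. intros H. unfold psi. rewrite !Kr_left; lra. Qed.

Lemma psi_right x : m + t + e <= x -> psi x = 0.
Proof. intros H. unfold psi. rewrite !Kr_lin; lra. Qed.

Lemma psi1_left : psi1 (m - t - e) = 0.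
Proof. unfold psi1. rewrite !Fr_left; lra. Qed.

Lemma psi1_right : psi1 (m + t + e) = 0.
Proof. unfold psi1. rewrite !Fr_right; lra. Qed.

Lemma psi_nonneg x : 0 <= psi x.
Proof.
  assert (HM := Mr_pos). assert (HC := Cr_bounds).
  unfold psi.
  destruct (Rle_or_lt x (m - e)) as [H1|H1].
  - rewrite (Kr_left (x - (m + t))), (Kr_left (x - m)) by lra.
    generalize (Kr_ge0 (x - (m - t))). lra.
  - destruct (Rle_or_lt x (m + e)) as [H2|H2].
    + rewrite (Kr_left (x - (m + t))) by lra. rewrite (Kr_lin (x - (m - t))) by lra.
      assert (Kr (x - m) <= Mr * (x - m + e)) by (apply Kr_up; lra).
      nra.
    + rewrite (Kr_lin (x - (m - t))) by lra. rewrite (Kr_lin (x - m)) by lra.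
      generalize (Kr_low (x - (m + t))). nra.
Qed.

Lemma psi_int : RInt psi (m - t - e) (m + t + e) = RInt (fun x => x ^ 2 / 2 * psi2 x) (m - t - e) (m + t + e).
Proof.
  set (c := m - t - e). set (d := m + t + e).
  set (P := fun x => x ^ 2 / 2 * psi1 x - x * psi x).
  assert (HP : forall x, is_derive P x (x ^ 2 / 2 * psi2 x - psi x)).
  { intros x. unfold P.
    assert (H1 : is_derive (fun x => x ^ 2 / 2) x x) by (auto_derive; auto; field).
    assert (H2 : is_derive (fun x : R => x) x 1) by (auto_derive; auto).
    assert (H3 := is_derive_mult _ _ x _ _ H1 (psi1_deriv x) Rmult_comm).
    assert (H4 := is_derive_mult _ _ x _ _ H2 (psi_deriv x) Rmult_comm).
    assert (H5 := is_derive_minus _ _ x _ _ H3 H4).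
    apply (isd_eq _ _ _ _ H5). unfold minus, plus, opp, mult; simpl. ring. }
  assert (Hc : forall z, continuous (fun x => x ^ 2 / 2 * psi2 x - psi x) z).
  { intros z. apply cminus. apply cmul. apply (ex_derive_continuous (fun x => x ^ 2 / 2)). auto_derive; auto.
    apply sm_cont, psi2_sm. apply sm_cont, psi_sm. }
  assert (HI := is_RInt_derive P _ c d (fun x _ => HP x) (fun x _ => Hc x)).
  apply is_RInt_unique in HI.
  assert (EP : minus (P d) (P c) = 0).
  { unfold P, c, d. rewrite psi1_left, psi1_right. rewrite (psi_left (m - t - e)) by lra. rewrite (psi_right (m + t + e)) by lra. unfold minus, plus, opp; simpl. ring. }

  assert (HI0 : RInt (fun x => x ^ 2 / 2 * psi2 x - psi x) c d = 0) by (rewrite HI; apply EP). clear HI. rename HI0 into HI.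
  rewrite Rint_minus in HI.
  2: { apply exR_all. intros z. apply cmul. apply (ex_derive_continuous (fun x => x ^ 2 / 2)). auto_derive; auto.
    apply sm_cont, psi2_sm. }
  2: { apply exR_all. apply sm_cont, psi_sm. }
  lra.
Qed.

Lemma conv_loc (W : R -> R) p c d : c <= p - e -> p + e <= d ->
  (forall z, c <= z <= d -> continuous W z) ->
  RInt (fun x => W x * rh (x - p)) c d = RInt (fun z => W (z + p) * rh z) (-e) e.
Proof.
  intros H1 H2 HW.
  set (K := fun z => W (z + p) * rh z).
  assert (HK : forall z, c - p <= z <= d - p -> continuous K z).
  { intros z Hz. unfold K. apply cmul. apply cshift. apply HW. lra. apply rh_cont. }
  assert (E1 : RInt (fun x => W x * rh (x - p)) c d = RInt K (c - p) (d - p)).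
  { rewrite <- (RInt_ext (fun y => scal 1 (K (1 * y + - p)))).
    replace (c - p) with (1 * c + - p) by ring. replace (d - p) with (1 * d + - p) by ring.
    apply (RInt_comp_lin K 1 (- p) c d).
    apply (exR K (c - p) (d - p)); auto; lra.
    intros x _. unfold K. unfold scal; simpl; unfold mult; simpl.
    replace (1 * x + - p + p) with x by ring. replace (1 * x + - p) with (x - p) by ring. ring. }
  rewrite E1.
  assert (EX : forall u v, c - p <= u <= d - p -> c - p <= v <= d - p -> ex_RInt K u v).
  { intros u v Hu Hv. apply (exR K (c - p) (d - p)); auto. }
  assert (Z1 : RInt K (c - p) (- e) = 0).
  { apply Rint_zero. intros x Hx. unfold K. rewrite rh_out; auto. ring.
    assert (x < Rmax (c - p) (- e)) by apply Hx. rewrite Rmax_right in H by lra. sabs. }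
  assert (Z2 : RInt K e (d - p) = 0).
  { apply Rint_zero. intros x Hx. unfold K. rewrite rh_out; auto. ring.
    assert (Rmin e (d - p) < x) by apply Hx. rewrite Rmin_left in H by lra. sabs. }
  assert (C1 := Rint_chasles K (c - p) (- e) e (EX (c-p) (-e) ltac:(lra) ltac:(lra)) (EX (-e) e ltac:(lra) ltac:(lra))).
  assert (C2 := Rint_chasles K (c - p) e (d - p) (EX (c-p) e ltac:(lra) ltac:(lra)) (EX e (d-p) ltac:(lra) ltac:(lra))).
  lra.
Qed.

Lemma exR_ext (A B : R -> R) p q : (forall x, A x = B x) -> ex_RInt A p q -> ex_RInt B p q.
Proof. intros H HA. exact (ex_RInt_ext A B p q (fun x _ => H x) HA). Qed.

Lemma alg2 (x y : R) : - x * y = - (x * y).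
Proof. ring. Qed.

Lemma approx (W : R -> R) p eps : (forall z, p - e <= z <= p + e -> continuous W z) ->
  (forall z, -e < z < e -> Rabs (W (z + p) - W p) <= eps) ->
  Rabs (RInt (fun z => W (z + p) * rh z) (-e) e - W p * Mr) <= eps * Mr.
Proof.
  intros HW Hb.
  assert (EX : ex_RInt (fun z => W (z + p) * rh z) (- e) e).
  { apply (exR _ (-e) e); try lra. intros z Hz. apply cmul. apply cshift. apply HW. lra. apply rh_cont. }
  assert (EXr : ex_RInt rh (- e) e) by (apply exR_all, rh_cont).
  assert (E : RInt (fun z => W (z + p) * rh z) (-e) e - W p * Mr = RInt (fun z => (W (z + p) - W p) * rh z) (-e) e).
  { rewrite (Rint_ext (fun z => (W (z + p) - W p) * rh z) (fun z => W (z + p) * rh z - W p * rh z)).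
    - rewrite Rint_minus.
      + rewrite Rint_scal; auto.
      + auto.
      + apply exR_scal; auto.
    - intros; ring. }
  assert (EXd : ex_RInt (fun z => (W (z + p) - W p) * rh z) (-e) e).
  { apply (exR_ext (fun z => W (z + p) * rh z - W p * rh z)).
    intros; ring. apply exR_minus; auto. apply exR_scal; auto. }
  rewrite E. apply Rabs_le_between. split.
  - replace (- (eps * Mr)) with (RInt (fun z => (- eps) * rh z) (-e) e).
    2: { rewrite Rint_scal; auto. apply alg2. }
    apply RInt_le; auto. lra. apply exR_scal; auto.
    intros x Hx. specialize (Hb x Hx). assert (0 <= rh x) by apply rho_nonneg.
    apply Rabs_le_between in Hb. nra.
  - replace (eps * Mr) with (RInt (fun z => eps * rh z) (-e) e).
    2: { rewrite Rint_scal; auto. }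
    apply RInt_le; auto. lra. apply exR_scal; auto.
    intros x Hx. specialize (Hb x Hx). assert (0 <= rh x) by apply rho_nonneg.
    apply Rabs_le_between in Hb. nra.
Qed.

End Bump2.


Lemma alg3 (F A X P : R) : (F - A * X / 2) * P = F * P - A * (X / 2 * P).
Proof. field. Qed.

Lemma alg5 (x y z : R) : 1 * (x + y - 2 * z) = x + y - 2 * z.
Proof. ring. Qed.

Section Main.
Variables (a b : Rbar) (f g : R -> R).
Hypothesis Hfc : forall x, in_open_interval a b x -> continuous f x.
Hypothesis Hgc : forall y, image_on a b f y ->
     filterlim g (within (image_on a b f) (locally y)) (locally (g y)).
Let h := fun t => g (f t).

Lemma distr_P3 : distrib_sub a b f g -> forall x0, in_open_interval a b x0 -> P3 f h x0.
Proof.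
  intros HD x0 Hx0 eps He.
  destruct (cont_ed h x0 (hc a b f g Hfc Hgc x0 Hx0) (eps / 2) ltac:(lra)) as [d1 [Hd1 Hd1']].
  destruct (I_ball _ _ _ Hx0) as [r [Hr Hr']].
  exists (Rmin d1 r / 2). split. generalize (Rmin_pos _ _ Hd1 Hr); lra.
  intros t Ht.
  assert (Htd : t < d1 / 2) by (generalize (Rmin_l d1 r); lra).
  assert (Htr : t < r / 2) by (generalize (Rmin_r d1 r); lra).
  set (A := h x0 + eps / 2).
  set (w := fun u => f u - A * u ^ 2 / 2).
  assert (Hw : forall z, Rabs (z - x0) <= r -> continuous w z).
  { intros z Hz. apply (cminus f (fun u => A * u ^ 2 / 2)). apply Hfc, Hr'; auto.
    apply (ex_derive_continuous (fun u => A * u ^ 2 / 2)). auto_derive; auto. }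
  set (eps' := eps * t ^ 2 / 8).
  assert (He' : 0 < eps') by (unfold eps'; apply Rmult_lt_0_compat; [apply Rmult_lt_0_compat; [lra|apply pow_lt; lra]|lra]).
  destruct (cont_ed w (x0 - t) (Hw (x0 - t) ltac:(sabs)) eps' He') as [da [Hda Hda']].
  destruct (cont_ed w (x0 + t) (Hw (x0 + t) ltac:(sabs)) eps' He') as [db [Hdb Hdb']].
  destruct (cont_ed w x0 (Hw x0 ltac:(sabs)) eps' He') as [dm [Hdm Hdm']].
  set (e := Rmin (Rmin da db) (Rmin dm (t / 4)) / 2).
  assert (Hep : 0 < e).
  { unfold e. generalize (Rmin_pos _ _ (Rmin_pos _ _ Hda Hdb) (Rmin_pos _ _ Hdm (ltac:(lra) : 0 < t / 4))). lra. }
  assert (e < da /\ e < db /\ e < dm /\ 4 * e <= t) as [Ea [Eb [Em Et]]].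
  { unfold e. generalize (Rmin_l (Rmin da db) (Rmin dm (t / 4))) (Rmin_r (Rmin da db) (Rmin dm (t / 4)))
      (Rmin_l da db) (Rmin_r da db) (Rmin_l dm (t / 4)) (Rmin_r dm (t / 4)). lra. }
  set (c := x0 - t - e). set (d := x0 + t + e).
  assert (HcI : in_open_interval a b c) by (apply Hr'; unfold c; sabs).
  assert (HdI : in_open_interval a b d) by (apply Hr'; unfold d; sabs).
  assert (Hwcd : forall z, c <= z <= d -> continuous w z) by (intros z Hz; apply Hw; unfold c, d in Hz; sabs).
  assert (Hfcd : forall z, c <= z <= d -> continuous f z) by (intros z Hz; apply Hfc, Hr'; unfold c, d in Hz; sabs).
  set (ps := psi e x0 t).
  assert (HI := HD ps c d (proj1 HcI) ltac:(unfold c, d; lra) (proj2 HdI) (psi_sm e Hep x0 t)).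
  specialize (HI ltac:(intros y [Hy|Hy]; [apply psi_left|apply psi_right]; auto; unfold c, d in Hy; lra)).
  specialize (HI (psi_nonneg e Hep x0 t Et)).
  rewrite (Rint_ext _ (fun y => f y * psi2 e x0 t y)) in HI.
  2: { intros y _. unfold ps. rewrite psi_D2; auto. }
  assert (Hps2 : forall z, continuous (psi2 e x0 t) z) by (apply sm_cont, psi2_sm; auto).
  assert (Hpsc : forall z, continuous ps z) by (apply sm_cont, psi_sm; auto).
  assert (Hq : forall z, continuous (fun u => u ^ 2 / 2) z)
    by (intros z; apply (ex_derive_continuous (fun u => u ^ 2 / 2)); auto_derive; auto).
  assert (B1 : RInt (fun y => g (f y) * ps y) c d <= A * RInt ps c d).
  { rewrite <- Rint_scal. apply RInt_le. unfold c, d; lra.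
    apply (exR _ c d); try (unfold c, d; lra). intros z Hz. apply cmul; auto. apply (hc a b f g Hfc Hgc). apply Hr'. unfold c, d in Hz; sabs.
    apply exR_scal. apply (exR _ c d); try (unfold c, d; lra). intros; auto.
    intros y Hy. assert (Rabs (h y - h x0) < eps / 2) by (apply Hd1'; unfold c, d in Hy; sabs).
    assert (0 <= ps y) by (apply psi_nonneg; auto). unfold h in H. unfold A, h. apply Rmult_le_compat_r; auto. apply Rabs_lt_between' in H. lra.
    apply (exR _ c d); try (unfold c, d; lra). intros; auto. }
  assert (B2 : RInt ps c d = RInt (fun x => x ^ 2 / 2 * psi2 e x0 t x) c d) by (apply psi_int; auto).
  assert (B3 : RInt (fun x => w x * psi2 e x0 t x) c d <= 0).
  { rewrite (Rint_ext _ (fun x => f x * psi2 e x0 t x - A * (x ^ 2 / 2 * psi2 e x0 t x))).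
    rewrite Rint_minus, Rint_scal. rewrite B2 in B1. lra.
    - apply (exR _ c d); try (unfold c, d; lra). intros; apply cmul; auto.
    - apply (exR _ c d); try (unfold c, d; lra). intros; apply cmul; auto.
    - apply exR_scal. apply (exR _ c d); try (unfold c, d; lra). intros; apply cmul; auto.
    - intros x _. unfold w. cbv beta. apply alg3. }
  set (rh := rho e).
  set (J := fun p => RInt (fun x => w x * rh (x - p)) c d).
  assert (B4 : RInt (fun x => w x * psi2 e x0 t x) c d = J (x0 - t) + J (x0 + t) - 2 * J x0).
  { rewrite (Rint_ext _ (fun x => 1 * (w x * rh (x - (x0 - t)) + w x * rh (x - (x0 + t)) - 2 * (w x * rh (x - x0))))).
    rewrite lin3. unfold J. apply alg5.
    all: try (apply (exR _ c d); try (unfold c, d; lra); intros; apply cmul; [apply Hwcd; auto|apply cshift'; apply rho_cont; auto]).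
    intros x _. unfold psi2, rh. ring. }
  assert (B5 : forall p, c <= p - e -> p + e <= d -> (forall z, -e < z < e -> Rabs (w (z + p) - w p) <= eps') ->
      w p * Mr e - eps' * Mr e <= J p).
  { intros p Hp1 Hp2 Hb. unfold J, rh. rewrite conv_loc; auto.
    assert (H := approx e Hep w p eps' ltac:(intros; apply Hwcd; lra) Hb).
    apply Rabs_le_between in H. unfold rh. lra. }
  assert (B5' : forall p, c <= p - e -> p + e <= d -> (forall z, -e < z < e -> Rabs (w (z + p) - w p) <= eps') ->
      J p <= w p * Mr e + eps' * Mr e).
  { intros p Hp1 Hp2 Hb. unfold J, rh. rewrite conv_loc; auto.
    assert (H := approx e Hep w p eps' ltac:(intros; apply Hwcd; lra) Hb).
    apply Rabs_le_between in H. unfold rh. lra. }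
  assert (Ja := B5 (x0 - t) ltac:(unfold c; lra) ltac:(unfold d; lra)
     ltac:(intros z Hz; left; apply Hda'; replace (z + (x0 - t) - (x0 - t)) with z by ring; sabs)).
  assert (Jb := B5 (x0 + t) ltac:(unfold c; lra) ltac:(unfold d; lra)
     ltac:(intros z Hz; left; apply Hdb'; replace (z + (x0 + t) - (x0 + t)) with z by ring; sabs)).
  assert (Jm := B5' x0 ltac:(unfold c; lra) ltac:(unfold d; lra)
     ltac:(intros z Hz; left; apply Hdm'; replace (z + x0 - x0) with z by ring; sabs)).
  assert (HM := Mr_pos e Hep).
  assert (Hsum : w (x0 - t) + w (x0 + t) - 2 * w x0 <= 4 * eps').
  { apply Rmult_le_reg_r with (Mr e); auto. nra. }
  assert (EQ := Q_sub_quad f A x0 t (proj1 Ht)).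
  assert (Qw : sym_quot2 w x0 t <= eps / 2).
  { unfold sym_quot2. apply Rmult_le_reg_r with (t ^ 2). apply pow_lt; lra.
    unfold Rdiv. rewrite Rmult_assoc, Rinv_l, Rmult_1_r. 2: { apply pow_nonzero; lra. }
    unfold eps' in Hsum. lra. }
  unfold w in Qw. unfold A in *. lra.
Qed.

End Main.

Theorem propositionA3 (a b : Rbar) (f g : R -> R) :
  Rbar_lt a b ->
  (forall x, in_open_interval a b x -> continuous f x) ->
  (exists m : R, forall x, in_open_interval a b x -> m <= f x) ->
  (forall y, image_on a b f y ->
     filterlim g (within (image_on a b f) (locally y)) (locally (g y))) ->
  (viscosity_sub a b f g <-> distrib_sub a b f g) /\
  (distrib_sub a b f g <-> symD2_sub a b f g).
Proof.
  intros Hab Hfc _ Hgc. split; split.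
  - intros Hv. apply P3_distr; auto. apply visc_P3; auto.
  - intros Hd. apply P3_visc. apply distr_P3; auto.
  - intros Hd x Hx. apply symD2_P3. apply (distr_P3 a b f g Hfc Hgc Hd x Hx).
  - intros Hs. apply P3_distr; auto. intros x Hx. intros eps He. apply (proj1 (symD2_P3 f x (g (f x))) (Hs x Hx) eps He).
Qed.
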